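(* Let $n,k$ be integers with $1 \leq k \leq n$, let $q$ be a prime power with $q > \binom{n-1}{k-1}$, and let $\mathbf{M}=(m_{i,j})$ be a $k \times n$ binary matrix in which every row has Hamming weight $n-k+1$. Then $\mathbf{M}$ is the support matrix of a generator matrix of some $[n,k]_q$ MDS code if and only if $f(\mathbf{V}_{\mathbf{M}}) \not\equiv 0$ (as a polynomial over $\mathbb{F}_q$).
   Context: For $\mathbf{G}=(g_{i,j}) \in \mathbb{F}_q^{k\times n}$, the support matrix of $\mathbf{G}$ is the $k\times n$ binary matrix with $(i,j)$ entry $0$ if $g_{i,j}=0$ and $1$ if $g_{i,j}\neq 0$. For a $k\times n$ binary matrix $\mathbf{M}=(m_{i,j})$, $\mathbf{V}_{\mathbf{M}}=(v_{i,j})$ is the matrix with $v_{i,j}=0$ if $m_{i,j}=0$ and $v_{i,j}=\xi_{i,j}$ if $m_{i,j}=1$, where the $\xi_{i,j}$ are distinct indeterminates. For any $k\times n$ matrix $\mathbf{N}$, $f(\mathbf{N})=\prod_{\mathbf{P}}\det(\mathbf{P})$, the product over all $\binom{n}{k}$ square submatrices $\mathbf{P}$ of order $k$ of $\mathbf{N}$ (obtained by choosing $k$ of the $n$ columns). An $[n,k]_q$ MDS code is a linear code of length $n$ and dimension $k$ over $\mathbb{F}_q$ with minimum distance $n-k+1$. *)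

(* Defs.v *)
From HB Require Import structures.
From mathcomp Require Import all_boot all_order all_algebra all_field.
From mathcomp Require Import mpoly.
Set Implicit Arguments. Unset Strict Implicit. Unset Printing Implicit Defensive.
Import GRing.Theory.
Local Open Scope ring_scope.

Definition hwt (F : fieldType) (n : nat) (c : 'rV[F]_n) : nat :=
  #|[set j : 'I_n | c 0 j != 0]|.

Definition min_dist_is (F : finFieldType) (k n : nat) (G : 'M[F]_(k, n)) (d : nat) : Prop :=
  (exists u : 'rV[F]_k, u *m G != 0 /\ hwt (u *m G) = d) /\
  (forall u : 'rV[F]_k, u *m G != 0 -> (d <= hwt (u *m G))%N).

Definition is_MDS_generator (F : finFieldType) (k n : nat) (G : 'M[F]_(k, n)) : Prop :=
  \rank G = k /\ min_dist_is G (n - k + 1).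

Definition support_mx (F : fieldType) (k n : nat) (G : 'M[F]_(k, n)) : 'M[bool]_(k, n) :=
  \matrix_(i, j) (G i j != 0).

Definition V_mx (F : fieldType) (k n : nat) (M : 'M[bool]_(k, n)) : 'M[{mpoly F[k * n]}]_(k, n) :=
  \matrix_(i, j) (if M i j then 'X_(mxvec_index i j) else 0).

Definition f_minors (R : comRingType) (k n : nat) (N : 'M[R]_(k, n)) : R :=
  \prod_(s : {ffun 'I_k -> 'I_n} | [forall i : 'I_k, forall j : 'I_k, (i < j)%N ==> (s i < s j)%N])
     \det (colsub s N).

(* Main.v *)
Require Import Defs.
From HB Require Import structures.
From mathcomp Require Import all_boot all_order all_algebra all_field.
From mathcomp Require Import mpoly.
From mathcomp Require Import fingroup perm.
From mathcomp Require Import zify.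
Import GRing.Theory.
Local Open Scope ring_scope.
Set Implicit Arguments. Unset Strict Implicit. Unset Printing Implicit Defensive.

Section PartA.
Variables (F : finFieldType) (m : nat).
Local Notation q := #|F|.

Definition set0m (mo : 'X_{1..m}) (i : 'I_m) : 'X_{1..m} :=
  [multinom (if j == i then 0%N else mo j) | j < m].

Definition pcoef (p : {mpoly F[m]}) i (d : nat) : {mpoly F[m]} :=
  \sum_(mo <- msupp p | mo i == d) p@_mo *: 'X_[set0m mo i].

Lemma pcoef_eval p i d (y : 'I_m -> F) :
  (pcoef p i d).@[y] =
  \sum_(mo <- msupp p | mo i == d) p@_mo * \prod_j y j ^+ set0m mo i j.
Proof.
rewrite /pcoef (big_morph (meval y) (mevalD y) (meval0 y)); apply: eq_bigr => mo _.
by rewrite mevalZ mevalX.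
Qed.

Lemma prod_set0 (mo : 'X_{1..m}) i (y : 'I_m -> F) t :
  \prod_j (if j == i then t else y j) ^+ set0m mo i j =
  \prod_j y j ^+ set0m mo i j.
Proof.
apply: eq_bigr => j _; rewrite mnmE.
by case: eqP => // _; rewrite !expr0.
Qed.

Lemma prod_split (mo : 'X_{1..m}) i (y : 'I_m -> F) :
  \prod_j y j ^+ mo j = y i ^+ mo i * \prod_j y j ^+ set0m mo i j.
Proof.
rewrite (bigD1 i) //= [X in _ = _ * X](bigD1 i) //= mnmE eqxx expr0 mul1r.
congr (_ * _); apply: eq_bigr => j /negPf ji; by rewrite mnmE ji.
Qed.

Lemma eval_split p i (y : 'I_m -> F) :
  (forall mo, mo \in msupp p -> (mo i < q)%N) ->
  p.@[y] = \sum_(d < q) y i ^+ d * (pcoef p i d).@[y].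
Proof.
move=> hp.
under [RHS]eq_bigr => d _ do rewrite pcoef_eval big_distrr big_mkcond /=.
rewrite exchange_big /= mevalE big_seq_cond [RHS]big_seq_cond.
apply: eq_bigr => mo /andP [Hmo _].
rewrite (bigD1 (Ordinal (hp _ Hmo))) //= eqxx [X in _ + X]big1 ?addr0.
  by rewrite (@prod_split mo i) mulrCA.
move=> d ne; case: eqP => // E; case/eqP: ne; apply/val_inj; by rewrite /= E.
Qed.

Lemma pcoef_mcoeff p i d (mo' : 'X_{1..m}) :
  (pcoef p i d)@_mo' =
  \sum_(mo <- msupp p | mo i == d) p@_mo * (set0m mo i == mo')%:R.
Proof.
rewrite /pcoef (big_morph (mcoeff mo') (mcoeffD mo') (mcoeff0 _ mo')).
by apply: eq_bigr => mo _; rewrite mcoeffZ mcoeffX.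
Qed.

Lemma set0m_inj (mo mo' : 'X_{1..m}) i : mo' i = mo i -> set0m mo' i = set0m mo i -> mo' = mo.
Proof.
move=> h1 /mnmP h2; apply/mnmP => j.
case: (eqVneq j i) => [->//|ji].
by have := h2 j; rewrite !mnmE (negPf ji).
Qed.

Lemma pcoef_coef p i (mo : 'X_{1..m}) : (pcoef p i (mo i))@_(set0m mo i) = p@_mo.
Proof.
rewrite pcoef_mcoeff.
have H : forall mo', mo' != mo -> mo' i == mo i -> (set0m mo' i == set0m mo i) = false.
  move=> mo' /negPf ne /eqP e; apply/negbTE/negP => /eqP E.
  by rewrite (@set0m_inj mo mo' i e E) eqxx in ne.
case: (boolP (mo \in msupp p)) => Hmo.
  rewrite big_mkcond (bigD1_seq mo) ?msupp_uniq //= !eqxx mulr1 big1 ?addr0 //.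
  by move=> mo' ne; case: ifP => // e; rewrite H // mulr0.
rewrite big1_seq ?(memN_msupp_eq0 Hmo) // => mo' /andP [e Hmo'].
rewrite H ?mulr0 //; apply/eqP => E; by rewrite -E Hmo' in Hmo.
Qed.

Lemma msupp_pcoef p i d (mo' : 'X_{1..m}) : mo' \in msupp (pcoef p i d) ->
  exists2 mo, mo \in msupp p & mo' = set0m mo i.
Proof.
rewrite mcoeff_msupp pcoef_mcoeff => H.
case: (hasP (a := fun mo => set0m mo i == mo') (s := msupp p)) => [[mo Hmo /eqP E]|].
  by exists mo.
move=> hn; case/negP: H.
rewrite big1_seq // => mo /andP [_ Hmo].
case: eqP => [E|]; last by rewrite mulr0.
by case: hn; exists mo => //; rewrite E.
Qed.

Lemma nz_eval_aux t : forall p : {mpoly F[m]},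
  (forall mo, mo \in msupp p -> forall j, (mo j < q)%N) ->
  (forall mo, mo \in msupp p -> forall j : 'I_m, (t <= j)%N -> mo j = 0%N) ->
  (forall y, p.@[y] = 0) -> p = 0.
Proof.
elim: t => [|t IH] p hq ht hy.
  apply/mpolyP => mo; rewrite mcoeff0.
  case: (boolP (mo \in msupp p)) => Hmo; last exact: memN_msupp_eq0.
  have mo0 : forall mo', mo' \in msupp p -> mo' = mo.
    move=> mo' H'; apply/mnmP => j; by rewrite (ht _ H') // (ht _ Hmo).
  have := hy (fun _ => 0); rewrite mevalE (bigD1_seq mo) ?msupp_uniq //=.
  rewrite [X in _ + X]big1_seq ?addr0; last first.
    by move=> mo' /andP [ne H']; rewrite (mo0 _ H') eqxx in ne.
  rewrite big1 ?mulr1 // => j _; by rewrite (ht _ Hmo).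
case: (ltnP t m) => htm; last first.
  apply: IH => // mo Hmo j tj; exfalso.
  by have := leq_trans htm tj; rewrite leqNgt ltn_ord.
pose i := Ordinal htm.
have hqi : forall mo, mo \in msupp p -> (mo i < q)%N by move=> mo H; apply: hq.
have pc0 : forall d : 'I_q, pcoef p i d = 0.
  move=> d; apply: IH.
  - move=> mo' /msupp_pcoef [mo Hmo ->] j; rewrite mnmE.
    case: eqP => _; last exact: hq.
    by apply: leq_ltn_trans (hq _ Hmo j).
  - move=> mo' /msupp_pcoef [mo Hmo ->] j tj; rewrite mnmE.
    case: eqP => // /eqP ji; apply: (ht _ Hmo).
    rewrite ltn_neqAle tj andbT; apply: contra ji => /eqP e.
    by apply/eqP/val_inj; rewrite /= e.
  - move=> y.
    pose Q := \poly_(d < q) (pcoef p i d).@[y].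
    have HQ : forall t0, root Q t0.
      move=> t0; apply/eqP.
      rewrite horner_poly -[RHS](hy (fun j => if j == i then t0 else y j)).
      rewrite (@eval_split p i _ hqi) eqxx.
      apply: eq_bigr => d' _; rewrite mulrC; congr (_ * _).
      by rewrite !pcoef_eval; apply: eq_bigr => mo _; rewrite prod_set0.
    have Q0 : Q = 0.
      apply/eqP; apply/negP => /negP nz.
      have := max_poly_roots nz (rs := enum F).
      rewrite enum_uniq -cardE => /(_ _ isT) H.
      have : all (root Q) (enum F) by apply/allP => x _; apply: HQ.
      move=> /H; rewrite ltnNge size_poly //.
    have := congr1 (fun P : {poly F} => P`_d) Q0.
    by rewrite coef_poly ltn_ord coef0.
apply/mpolyP => mo; rewrite mcoeff0.
case: (boolP (mo \in msupp p)) => Hmo; last exact: memN_msupp_eq0.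
by rewrite -(@pcoef_coef p i) (pc0 (Ordinal (hqi _ Hmo))) mcoeff0.
Qed.

Lemma nz_eval (p : {mpoly F[m]}) : p != 0 ->
  (forall mo, mo \in msupp p -> forall j, (mo j < q)%N) ->
  exists y : 'I_m -> F, p.@[y] != 0.
Proof.
move=> nz hq.
case: (boolP [exists y : {ffun 'I_m -> F}, p.@[y] != 0]).
  by case/existsP => y H; exists y.
move=> /existsPn H; case/negP: nz; apply/eqP.
apply: (@nz_eval_aux m) => //.
  by move=> mo _ j; rewrite leqNgt ltn_ord.
move=> y; have := H [ffun j => y j]; rewrite negbK => /eqP <-.
by apply: meval_eq => j; rewrite ffunE.
Qed.

End PartA.

Section PartB.
Variables (F : finFieldType) (m : nat).

Definition dle (l : 'I_m) (d : nat) (p : {mpoly F[m]}) :=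
  forall mo, mo \in msupp p -> (mo l <= d)%N.

Lemma dle_weak l d d' p : (d <= d')%N -> dle l d p -> dle l d' p.
Proof. by move=> h H mo /H /leq_trans; apply. Qed.

Lemma dle0 l d : dle l d 0.
Proof. by move=> mo; rewrite -mpolyC0 msupp0. Qed.

Lemma dle1 l d : dle l d 1.
Proof. by move=> mo; rewrite -mpolyC1 msupp1 inE => /eqP ->; rewrite mnm0E. Qed.

Lemma dleX l l' : dle l (l' == l) 'X_l'.
Proof. by move=> mo; rewrite msuppX inE => /eqP ->; rewrite mnm1E. Qed.

Lemma dleD l d p1 p2 : dle l d p1 -> dle l d p2 -> dle l d (p1 + p2).
Proof.
move=> h1 h2 mo /msuppD_le; rewrite mem_cat => /orP [] ?; [exact: h1|exact: h2].
Qed.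

Lemma dleN l d p : dle l d p -> dle l d (- p).
Proof. by move=> h mo; rewrite (perm_mem (msuppN p)) => /h. Qed.

Lemma dleM l d1 d2 p1 p2 : dle l d1 p1 -> dle l d2 p2 -> dle l (d1 + d2) (p1 * p2).
Proof.
move=> h1 h2 mo /msuppM_le /allpairsP [[m1 m2] /= [H1 H2 ->]].
by rewrite mnmDE leq_add ?h1 ?h2.
Qed.

Lemma dle_sum l d (I : Type) (r : seq I) (P : pred I) (f : I -> {mpoly F[m]}) :
  (forall i, P i -> dle l d (f i)) -> dle l d (\sum_(i <- r | P i) f i).
Proof.
move=> H; apply: (big_ind (dle l d)) => //; [exact: dle0|exact: dleD].
Qed.

Lemma dle_prod l (I : Type) (r : seq I) (P : pred I) (f : I -> {mpoly F[m]}) c :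
  (forall i, P i -> dle l (c i) (f i)) ->
  dle l (\sum_(i <- r | P i) c i)%N (\prod_(i <- r | P i) f i).
Proof.
move=> H; apply: (big_ind2 (fun p d => dle l d p)) => //.
  exact: dle1.
by move=> x1 x2 y1 y2 h1 h2; apply: dleM.
Qed.

End PartB.

Lemma mxvec_index_inj k n (i i' : 'I_k) (j j' : 'I_n) :
  mxvec_index i j = mxvec_index i' j' -> i = i' /\ j = j'.
Proof.
move=> E.
pose A : 'M[('I_k * 'I_n)%type]_(k, n) := \matrix_(a, b) (a, b).
have := mxvecE A i j; rewrite E mxvecE !mxE => [[-> ->]]; by [].
Qed.

Definition incr k n (s : {ffun 'I_k -> 'I_n}) :=
  [forall i : 'I_k, forall j : 'I_k, (i < j)%N ==> (s i < s j)%N].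

Section Deg.
Variables (F : finFieldType) (k n : nat) (M : 'M[bool]_(k, n)).

Lemma dle_det (s : {ffun 'I_k -> 'I_n}) i j :
  dle (mxvec_index i j) [exists b, s b == j] (\det (colsub s (@V_mx F k n M))).
Proof.
apply: dle_sum => sg _.
rewrite -[nat_of_bool _]add0n; apply: dleM.
  case: (perm.odd_perm sg); rewrite ?expr1 ?expr0; [apply: dleN|]; exact: dle1.
pose c := fun a : 'I_k => (mxvec_index a (s (sg a)) == mxvec_index i j) : nat.
apply: (@dle_weak _ _ _ (\sum_(a < k) c a)%N).
  rewrite (bigD1 i) //= big1 ?addn0.
    rewrite /c; case: eqP => //= /mxvec_index_inj [_ E].
    by rewrite lt0b; apply/existsP; exists (sg i); rewrite E.
  move=> a ai; rewrite /c; case: eqP => // /mxvec_index_inj [E _].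
  by rewrite E eqxx in ai.
apply: dle_prod => a _; rewrite !mxE.
case: (M a (s (sg a))); [exact: dleX|exact: dle0].
Qed.

End Deg.

Section Incr.
Variables (k n : nat).

Lemma incr_inj (s : {ffun 'I_k -> 'I_n}) : incr s -> injective s.
Proof.
move=> /forallP H a b E; apply: val_inj; apply/eqP; rewrite eqn_leq.
apply/andP; split; rewrite leqNgt; apply/negP => lt.
  by have := implyP (forallP (H b) a) lt; rewrite E ltnn.
by have := implyP (forallP (H a) b) lt; rewrite E ltnn.
Qed.

Lemma sorted_ord p : sorted (fun a b : 'I_p => (a < b)%N) (enum 'I_p).
Proof.
have := iota_ltn_sorted 0 p; rewrite -val_enum_ord sorted_map.
by [].
Qed.

Lemma sorted_set p (Z : {set 'I_p}) : sorted (fun a b : 'I_p => (a < b)%N) (enum Z).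
Proof.
have -> : enum Z = [seq x <- enum 'I_p | x \in Z] by rewrite enumT.
apply: sorted_filter; last exact: sorted_ord.
move=> a b c; exact: ltn_trans.
Qed.

Lemma incr_image_inj (s1 s2 : {ffun 'I_k -> 'I_n}) : incr s1 -> incr s2 ->
  [set s1 x | x in 'I_k] = [set s2 x | x in 'I_k] -> s1 = s2.
Proof.
move=> h1 h2 E.
have so : forall s : {ffun 'I_k -> 'I_n}, incr s ->
    sorted (fun a b : 'I_n => (a < b)%N) [seq s x | x <- enum 'I_k].
  move=> s /forallP hs; rewrite sorted_map.
  apply: sub_sorted (sorted_ord k) => a b ab.
  exact: (implyP (forallP (hs a) b) ab).
have : [seq s1 x | x <- enum 'I_k] = [seq s2 x | x <- enum 'I_k].
  apply: irr_sorted_eq (so _ h1) (so _ h2) _.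
  - move=> a b c; exact: ltn_trans.
  - move=> a; exact: ltnn.
  move=> y; apply/idP/idP => /mapP [x _ ->].
    have : s1 x \in [set s1 x | x in 'I_k] by apply: imset_f.
    by rewrite E => /imsetP [x' _ ->]; apply: map_f; rewrite mem_enum.
  have : s2 x \in [set s2 x | x in 'I_k] by apply: imset_f.
  by rewrite -E => /imsetP [x' _ ->]; apply: map_f; rewrite mem_enum.
move/eq_in_map => H; apply/ffunP => x; apply: H; by rewrite mem_enum.
Qed.

Lemma count_incr (j : 'I_n) :
  (#|[set s : {ffun 'I_k -> 'I_n} | incr s && [exists b, s b == j]]| <= 'C(n.-1, k.-1))%N.
Proof.
set D := [set s : {ffun 'I_k -> 'I_n} | _].
pose g := fun s : {ffun 'I_k -> 'I_n} => [set s x | x in 'I_k] :\ j.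
have gD : {in D &, injective g}.
  move=> s1 s2; rewrite !inE => /andP [h1 /existsP [b1 /eqP e1]] /andP [h2 /existsP [b2 /eqP e2]] E.
  apply: incr_image_inj h1 h2 _.
  have j1 : j \in [set s1 x | x in 'I_k] by rewrite -e1; apply: imset_f.
  have j2 : j \in [set s2 x | x in 'I_k] by rewrite -e2; apply: imset_f.
  by rewrite -(setD1K j1) -(setD1K j2); congr (_ |: _).
rewrite -(card_in_imset gD).
have : (#|g @: D| <= #|[set A : {set 'I_n} | A \subset [set~ j] & #|A| == k.-1]|)%N.
  apply: subset_leq_card; apply/subsetP => A /imsetP [s].
  rewrite inE => /andP [hs /existsP [b /eqP e]] ->.
  rewrite inE; apply/andP; split.
    by apply/subsetP => x; rewrite !inE => /andP [].
  have jin : j \in [set s x | x in 'I_k] by rewrite -e; apply: imset_f.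
  have -> : #|g s| = #|[set s x | x in 'I_k]|.-1 by rewrite [in RHS](cardsD1 j) jin.
  by rewrite (card_imset _ (incr_inj hs)) card_ord.
by rewrite cards_draws cardsC1 card_ord.
Qed.

Lemma exists_incr (Z : {set 'I_n}) : (k <= #|Z|)%N -> (0 < n)%N ->
  exists s : {ffun 'I_k -> 'I_n}, incr s /\ forall b, s b \in Z.
Proof.
move=> kZ n0.
pose j0 : 'I_n := Ordinal n0.
exists [ffun b : 'I_k => nth j0 (enum Z) b]; split.
  apply/forallP => a; apply/forallP => b; apply/implyP => ab; rewrite !ffunE.
  have sz : forall c : 'I_k, (c < size (enum Z))%N.
    by move=> c; rewrite -cardE; apply: leq_trans kZ.
  apply: (sorted_ltn_nth (leT := fun a b : 'I_n => (a < b)%N)) => //.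
  - move=> x y z; exact: ltn_trans.
  - exact: sorted_set.
  - exact: sz.
  - exact: sz.
move=> b; rewrite ffunE -mem_enum; apply: mem_nth.
by rewrite -cardE; apply: leq_trans kZ.
Qed.

End Incr.

Lemma eval_f (F : finFieldType) k n m (N : 'M[{mpoly F[m]}]_(k, n)) (y : 'I_m -> F) :
  (f_minors N).@[y] = f_minors (map_mx (meval y) N).
Proof.
rewrite /f_minors rmorph_prod; apply: eq_bigr => s _.
by rewrite -det_map_mx map_mxsub.
Qed.

Lemma hwt0 (F : fieldType) n : hwt (0 : 'rV[F]_n) = 0%N.
Proof. by apply/eqP; rewrite cards_eq0; apply/eqP/setP => j; rewrite !inE mxE eqxx. Qed.

Section Main.
Variables (F : finFieldType) (k n : nat).

Lemma mds_minors (G : 'M[F]_(k, n)) : is_MDS_generator G ->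
  forall s : {ffun 'I_k -> 'I_n}, incr s -> \det (colsub s G) != 0.
Proof.
move=> [rk [_ hmin]] s hs; apply/negP => /det0P [v vnz vG].
have rf : row_free G by rewrite /row_free rk.
have uG : v *m G != 0 by rewrite mulmx_free_eq0.
have := hmin _ uG.
set u := v *m G.
have z : forall b, u 0 (s b) = 0.
  move=> b; have := congr1 (fun A : 'M[F]_(1,k) => A 0 b) vG.
  by rewrite mulmx_colsub !mxE.
have sub : [set j | u 0 j != 0] \subset ~: [set s x | x in 'I_k].
  apply/subsetP => j; rewrite !inE; apply: contra => /imsetP [b _ ->].
  by rewrite z.
have c1 : (hwt u <= #|~: [set s x | x in 'I_k]|)%N by exact: subset_leq_card sub.
have c2 := cardsC [set s x | x in 'I_k].
rewrite (card_imset _ (incr_inj hs)) !card_ord in c2.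
move: c1 c2; generalize (hwt u) #|~: [set s x | x in 'I_k]| => a b; lia.
Qed.

Variable (M : 'M[bool]_(k, n)).
Hypotheses (k1 : (1 <= k)%N) (kn : (k <= n)%N)
  (hw : forall i : 'I_k, #|[set j : 'I_n | M i j]| = (n - k + 1)%N).

Lemma minors_mds (G : 'M[F]_(k, n)) :
  (forall i j, M i j = false -> G i j = 0) ->
  (forall s : {ffun 'I_k -> 'I_n}, incr s -> \det (colsub s G) != 0) ->
  support_mx G = M /\ is_MDS_generator G.
Proof.
move=> hG hdet.
have n0 : (0 < n)%N by apply: leq_trans kn.
have W : forall v : 'rV_k, v != 0 -> (n - k + 1 <= hwt (v *m G))%N.
  move=> v vnz; rewrite leqNgt; apply/negP => lt.
  set Z := [set j | (v *m G) 0 j == 0].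
  have cZ : (k <= #|Z|)%N.
    have e : (hwt (v *m G) + #|Z| = n)%N.
      rewrite -[RHS](card_ord n) -(cardsC [set j | (v *m G) 0 j != 0]).
      by congr (_ + _); apply: eq_card => j; rewrite !inE negbK.
    move: lt e; generalize (hwt (v *m G)) #|Z| => a b; lia.
  have [s [hs sZ]] := exists_incr cZ n0.
  case/negP: (hdet s hs); apply/det0P; exists v => //.
  rewrite mulmx_colsub; apply/matrixP => a b; rewrite (ord1 a) [RHS]mxE.
  have := sZ b; rewrite inE => /eqP h; rewrite -h.
  by rewrite [LHS]mxE.
have rowE' : forall (i : 'I_k) (j : 'I_n), ((delta_mx 0 i : 'rV[F]_k) *m G) 0 j = G i j.
  by move=> i j; rewrite -rowE mxE.
have ei0 : forall i : 'I_k, (delta_mx 0 i : 'rV[F]_k) != 0 :> 'rV[F]_k.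
  move=> i; apply/eqP => /matrixP /(_ 0 i); rewrite !mxE !eqxx /=.
  by move/eqP; rewrite oner_eq0.
have nzset : forall i : 'I_k, [set j | ((delta_mx 0 i : 'rV[F]_k) *m G) 0 j != 0] = [set j | M i j].
  move=> i; apply/eqP; rewrite eqEcard; apply/andP; split.
    apply/subsetP => j; rewrite !inE rowE'.
    by case E: (M i j) => //; rewrite (hG _ _ E) eqxx.
  by rewrite hw; apply: W.
have rk : \rank G = k.
  have hT : (k <= #|[set: 'I_n]|)%N by rewrite cardsT card_ord.
  have [s0 [hs0 _]] := exists_incr hT n0.
  apply/eqP; rewrite eqn_leq rank_leq_row /=.
  have h1 : \rank (colsub s0 G) = k.
    by apply: mxrank_unit; rewrite unitmxE unitfE; apply: hdet.
  have h2 : (\rank (G *m colsub s0 1%:M) <= \rank G)%N := mxrankM_maxl _ _.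
  by rewrite mulmx_colsub mulmx1 h1 in h2.
split.
  apply/matrixP => i j; rewrite mxE.
  by have := nzset i; move/setP/(_ j); rewrite !inE rowE'.
split => //; split.
  pose i0 : 'I_k := Ordinal k1.
  exists (delta_mx 0 i0 : 'rV[F]_k); rewrite /hwt nzset hw; split => //.
  apply/eqP => E; have := W _ (ei0 i0); rewrite E hwt0; lia.
move=> u uG; apply: W; apply: contra uG => /eqP ->; by rewrite mul0mx.
Qed.

End Main.

Unset Implicit Arguments.

Theorem lemma1 (F : finFieldType) (n k : nat) (M : 'M[bool]_(k, n)) :
  (1 <= k)%N -> (k <= n)%N ->
  ('C(n.-1, k.-1) < #|F|)%N ->
  (forall i : 'I_k, #|[set j : 'I_n | M i j]| = (n - k + 1)%N) ->
  ((exists G : 'M[F]_(k, n), support_mx G = M /\ is_MDS_generator G) <->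
   f_minors (@V_mx F k n M) != 0).
Proof.
move=> k1 kn hq hw; split.
  move=> [G [sG mds]].
  pose x := fun l : 'I_(k * n) => mxvec G 0 l.
  have VG : map_mx (meval x) (V_mx F M) = G.
    apply/matrixP => i j; rewrite !mxE -sG mxE.
    case: eqP => [->|_]; first by rewrite meval0.
    by rewrite mevalXU /x mxvecE.
  have fG : f_minors G != 0.
    apply/prodf_neq0 => s hs; exact: (mds_minors mds hs).
  apply: contra_neq fG => E.
  by rewrite -VG -eval_f E meval0.
move=> hf.
have hdeg : forall mo, mo \in msupp (f_minors (V_mx F M)) -> forall l, (mo l < #|F|)%N.
  move=> mo Hmo l; case: (mxvec_indexP l) => i j.
  apply: leq_ltn_trans hq.
  have H := @dle_prod F (k * n) (mxvec_index i j) _ (index_enum _)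
    (fun s : {ffun 'I_k -> 'I_n} => incr s)
    (fun s => \det (colsub s (V_mx F M))) (fun s => nat_of_bool [exists b, s b == j])
    (fun s _ => @dle_det F k n M s i j).
  apply: leq_trans (H _ Hmo) _.
  rewrite -big_mkcondr /= ?sum1_card.
  by move: (@count_incr k n j); rewrite cardsE.
have [y hy] := @nz_eval F (k * n) _ hf hdeg.
pose G := map_mx (meval y) (V_mx F M).
have fG : f_minors G != 0 by rewrite /G -eval_f.
apply: (ex_intro _ G); apply: minors_mds => //.
  by move=> i j E; rewrite /G !mxE E meval0.
move=> s hs; move/prodf_neq0: fG; apply; exact: hs.
Qed.
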